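(* For every $n\geq 1$ and every $w\in\{0,1\}^n$, there is a prenex first-order sentence over $\tau_{\mathsf{string}}$ with $3\lceil \log_3 n\rceil$ quantifiers, whose quantifier prefix consists of $\lceil\log_3 n\rceil$ consecutive blocks $\exists\exists\forall$, that is true in $\mathbf{B}_w$ and false in $\mathbf{B}_{w'}$ for every $w'\in\{0,1\}^n\setminus\{w\}$.
   Context: Vocabulary $\tau_{\mathsf{string}}=\langle <, S;\ \mathsf{min},\mathsf{max}\rangle$ with $<$ binary, $S$ unary, $\mathsf{min},\mathsf{max}$ constants. A string $w=w_1\cdots w_n\in\{0,1\}^n$ ($n\geq 1$) is encoded by the structure $\mathbf{B}_w$ with universe $\{1,\dots,n\}$, $<$ the usual order, $S=\{i: w_i=1\}$, $\mathsf{min}=1$, $\mathsf{max}=n$. The number of quantifiers is the number of quantifier occurrences. *)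

(* Defs.v *)
From mathcomp Require Import all_boot.
Set Implicit Arguments. Unset Strict Implicit. Unset Printing Implicit Defensive.

Inductive term : Type :=
| TVar : nat -> term
| TMin : term
| TMax : term.

Inductive formula : Type :=
| FLt  : term -> term -> formula
| FS   : term -> formula
| FEq  : term -> term -> formula
| FNot : formula -> formula
| FAnd : formula -> formula -> formula
| FOr  : formula -> formula -> formula
| FImp : formula -> formula -> formula
| FEx  : nat -> formula -> formula
| FAll : nat -> formula -> formula.

Definition term_fv (t : term) : seq nat :=
  match t with TVar x => [:: x] | _ => [::] end.

Fixpoint fv (f : formula) : seq nat :=
  match f with
  | FLt s t | FEq s t => term_fv s ++ term_fv t
  | FS t => term_fv t
  | FNot g => fv g
  | FAnd g h | FOr g h | FImp g h => fv g ++ fv h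
  | FEx x g | FAll x g => filter (fun y => y != x) (fv g)
  end.

Definition sentence (f : formula) : Prop := fv f = [::].

Fixpoint qcount (f : formula) : nat :=
  match f with
  | FLt _ _ | FEq _ _ | FS _ => 0
  | FNot g => qcount g
  | FAnd g h | FOr g h | FImp g h => qcount g + qcount h
  | FEx _ g | FAll _ g => (qcount g).+1
  end.

Inductive quant : Type := QEx | QAll.

Fixpoint qprefix (f : formula) : seq quant :=
  match f with
  | FEx _ g => QEx :: qprefix g
  | FAll _ g => QAll :: qprefix g
  | _ => [::]
  end.

Fixpoint matrix (f : formula) : formula :=
  match f with
  | FEx _ g | FAll _ g => matrix g
  | _ => f
  end.

Definition qfree (f : formula) : Prop := qcount f = 0.

Definition prenex (f : formula) : Prop := qfree (matrix f).

(* Semantics in B_w: universe {1..n}, n = size w, S = {i | w_i = 1},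
   min = 1, max = n, with w_i = nth false w (i-1). *)
Definition upd (a : nat -> nat) (x i : nat) : nat -> nat :=
  fun y => if y == x then i else a y.

Definition teval (w : seq bool) (a : nat -> nat) (t : term) : nat :=
  match t with
  | TVar x => a x
  | TMin => 1
  | TMax => size w
  end.

Fixpoint sat (w : seq bool) (a : nat -> nat) (f : formula) : Prop :=
  match f with
  | FLt s t => teval w a s < teval w a t
  | FS t => let i := teval w a t in (1 <= i <= size w) /\ nth false w i.-1 = true
  | FEq s t => teval w a s = teval w a t
  | FNot g => ~ sat w a g
  | FAnd g h => sat w a g /\ sat w a h
  | FOr g h => sat w a g \/ sat w a h
  | FImp g h => sat w a g -> sat w a h
  | FEx x g => exists i, (1 <= i <= size w) /\ sat w (upd a x i) g
  | FAll x g => forall i, (1 <= i <= size w) -> sat w (upd a x i) g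
  end.

(* truth of a sentence in B_w (the assignment is irrelevant for sentences) *)
Definition holds (w : seq bool) (f : formula) : Prop := sat w (fun _ => 1) f.

(* ceil(log_3 n) for n >= 1 is up_log 3 n (smallest e with n <= 3^e) *)
Definition ceil_log3 (n : nat) : nat := up_log 3 n.

(* Main.v *)
From Stdlib Require Import Classical.
Require Import Defs.
From mathcomp Require Import all_boot zify.


Fixpoint wrap (k : nat) (N : formula) : formula :=
  match k with
  | 0 => N
  | k'.+1 => FEx (3*k) (FEx (3*k).+1 (FAll (3*k).+2 (wrap k' N)))
  end.

Definition lit (h : bool) (t : term) : formula := if h then FS t else FNot (FS t).
Definition OrdF (tp : seq bool) (p q : term) : formula :=
  if tp is [::] then FEq p q else FLt p q.
Definition Guard (z : nat) (p q : term) : formula :=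
  FAnd (FLt p (TVar z)) (FNot (FLt q (TVar z))).

Fixpoint M (k : nat) (tp : seq bool) (p q : term) : formula :=
  match k with
  | 0 => FAnd (FEq (TVar 5) q) (lit (head false tp) q)
  | k'.+1 =>
    let c := 3 ^ k' in
    let u := TVar (3*k) in let v := TVar (3*k).+1 in let z := (3*k).+2 in
    let part t p q := FAnd (OrdF t p q) (FImp (Guard z p q) (M k' t p q)) in
    FAnd (part (take c tp) p u)
      (FAnd (part (take c (drop c tp)) u v) (part (drop (c + c) tp) v q))
  end.

Lemma qcount_wrap k N : qcount (wrap k N) = 3 * k + qcount N.
Proof. elim: k => //= k ->; lia. Qed.

Lemma qprefix_wrap k N :
  qprefix (wrap k N) = flatten (nseq k [:: QEx; QEx; QAll]) ++ qprefix N.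
Proof. by elim: k => //= k ->. Qed.

Lemma matrix_wrap k N : matrix (wrap k N) = matrix N.
Proof. by elim: k. Qed.

Lemma qcount_M k tp p q : qcount (M k tp p q) = 0.
Proof.
elim: k tp p q => [|k IH] tp p q /=.
  by case: (head false tp).
by rewrite !IH; case: (take _ _) => [|??]; case: (take _ _) => [|??];
  case: (drop _ _) => [|??].
Qed.

Lemma fv_wrap k N y : y \in fv (wrap k N) -> y \in fv N /\ (y < 3 \/ 3 * k + 2 < y).
Proof.
elim: k => [|k IH] /=; first by move=> ->; split=> //; lia.
rewrite !mem_filter => /andP [/eqP H1 /andP [/eqP H2 /andP [/eqP H3 /IH [Hin Hr]]]].
split=> //; lia.
Qed.

Lemma fv_lit h t : fv (lit h t) = term_fv t.
Proof. by case: h. Qed.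

Lemma fv_OrdF tp p q : fv (OrdF tp p q) = term_fv p ++ term_fv q.
Proof. by case: tp. Qed.

Lemma fv_M k tp p q y : y \in fv (M k tp p q) ->
  y \in term_fv p \/ y \in term_fv q \/ (3 <= y <= 3 * maxn k 1 + 2).
Proof.
elim: k tp p q => [|k IH] tp p q /=.
  rewrite fv_lit inE mem_cat => /orP [/eqP ->|H]; first by right; right.
  by case/orP: H; auto.
have Hb : 3 * maxn k 1 + 2 <= 3 * k.+1 + 2 by lia.
have Hm : maxn k.+1 1 = k.+1 by lia.
rewrite Hm.
rewrite !fv_OrdF !mem_cat !inE => H.
repeat match goal with
 | H : is_true (_ || _) |- _ => case/orP: H => H
 | H : is_true (_ \in _ ++ _) |- _ => rewrite mem_cat in H
 | H : is_true (_ \in _ :: _) |- _ => rewrite inE in H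
 end;
 try (by auto);
 try (move/eqP: H => ->; right; right; lia);
 (case: (IH _ _ _ H) => [|[|]]; rewrite /= ?inE; try (by auto);
       try (move/eqP => ->; right; right; lia);
       move=> ?; right; right; lia).
Qed.

Definition agree (k : nat) (a b : nat -> nat) := forall y, 3 * k + 3 <= y -> b y = a y.
Definition tok (k : nat) (t : term) := if t is TVar x then 3 * k + 3 <= x else true.

Lemma teval_agree w k a b t : tok k t -> agree k a b -> teval w b t = teval w a t.
Proof. by case: t => //= x Hx Hab; apply: Hab. Qed.

Lemma wrap_ext w k : forall N N' a,
  (forall b, agree k a b -> (sat w b N <-> sat w b N')) ->
  (sat w a (wrap k N) <-> sat w a (wrap k N')).
Proof.
elim: k => [|k IH] N N' a H /=; first by apply: H => y.
have Hag : forall i j l b, agree k (upd (upd (upd a (3 * k.+1) i) (3 * k.+1).+1 j) (3 * k.+1).+2 l) b -> agree k.+1 a b.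
  move=> i j l b Hb y Hy; rewrite Hb; last lia.
  rewrite /upd; have -> : (y == (3 * k.+1).+2) = false by apply/eqP; lia.
  have -> : (y == (3 * k.+1).+1) = false by apply/eqP; lia.
  have -> : (y == (3 * k.+1)) = false by apply/eqP; lia.
  by [].
split.
- move=> [i [Hi [j [Hj Hl]]]]; exists i; split=> //; exists j; split=> // l Hl'.
  by apply/(IH N N' _ _); [move=> b Hb; apply: H; apply: Hag Hb | apply: Hl].
- move=> [i [Hi [j [Hj Hl]]]]; exists i; split=> //; exists j; split=> // l Hl'.
  by apply/(IH N N' _ _); [move=> b Hb; apply: H; apply: Hag Hb | apply: Hl].
Qed.

Lemma wrap_true w k : 0 < size w -> forall N a,
  (forall b, agree k a b -> sat w b N) -> sat w a (wrap k N).
Proof.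
move=> Hw; elim: k => [|k IH] N a H /=; first by apply: H => y.
exists 1; split; first by rewrite leqnn.
exists 1; split; first by rewrite leqnn.
move=> l Hl; apply: IH => b Hb; apply: H => y Hy; rewrite Hb; last lia.
rewrite /upd; have -> : (y == (3 * k.+1).+2) = false by apply/eqP; lia.
have -> : (y == (3 * k.+1).+1) = false by apply/eqP; lia.
have -> : (y == (3 * k.+1)) = false by apply/eqP; lia.
by [].
Qed.

Lemma wrap_false w k : 0 < size w -> forall N a,
  (forall b, agree k a b -> ~ sat w b N) -> ~ sat w a (wrap k N).
Proof.
move=> Hw; elim: k => [|k IH] N a H /=; first by apply: H => y.
move=> [i [Hi [j [Hj Hl]]]].
have /Hl : 1 <= 1 <= size w by rewrite leqnn.
apply: IH => b Hb; apply: H => y Hy; rewrite Hb; last lia.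
rewrite /upd; have -> : (y == (3 * k.+1).+2) = false by apply/eqP; lia.
have -> : (y == (3 * k.+1).+1) = false by apply/eqP; lia.
have -> : (y == (3 * k.+1)) = false by apply/eqP; lia.
by [].
Qed.

Lemma wrap3 w k a O1 G1 N1 O2 G2 N2 O3 G3 N3 : 0 < size w ->
  (forall b, agree k a b ->
     (sat w b O1 <-> sat w a O1) /\ (sat w b G1 <-> sat w a G1) /\
     (sat w b O2 <-> sat w a O2) /\ (sat w b G2 <-> sat w a G2) /\
     (sat w b O3 <-> sat w a O3) /\ (sat w b G3 <-> sat w a G3)) ->
  (sat w a O1 -> sat w a O2 -> sat w a O3 ->
     ~ (sat w a G1 /\ sat w a G2) /\ ~ (sat w a G1 /\ sat w a G3) /\ ~ (sat w a G2 /\ sat w a G3)) ->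
  (sat w a (wrap k (FAnd (FAnd O1 (FImp G1 N1)) (FAnd (FAnd O2 (FImp G2 N2)) (FAnd O3 (FImp G3 N3))))) <->
   (sat w a O1 /\ sat w a O2 /\ sat w a O3) /\
   (sat w a G1 -> sat w a (wrap k N1)) /\ (sat w a G2 -> sat w a (wrap k N2)) /\
   (sat w a G3 -> sat w a (wrap k N3))).
Proof.
move=> Hw Hst Hex.
have [HO|HO] := classic (sat w a O1 /\ sat w a O2 /\ sat w a O3); last first.
  split; last by case.
  move=> Hs; exfalso; move: Hs; apply: wrap_false => // b Hb /=.
  have := Hst b Hb; intuition.
case: HO => [H1 [H2 H3]]; have := Hex H1 H2 H3 => [[E12 [E13 E23]]].
have [HG1|HG1] := classic (sat w a G1).
  have ->: (sat w a (wrap k (FAnd (FAnd O1 (FImp G1 N1)) (FAnd (FAnd O2 (FImp G2 N2)) (FAnd O3 (FImp G3 N3))))) <-> sat w a (wrap k N1)).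
    by apply: wrap_ext => b Hb /=; have := Hst b Hb; intuition.
  intuition.
have [HG2|HG2] := classic (sat w a G2).
  have ->: (sat w a (wrap k (FAnd (FAnd O1 (FImp G1 N1)) (FAnd (FAnd O2 (FImp G2 N2)) (FAnd O3 (FImp G3 N3))))) <-> sat w a (wrap k N2)).
    by apply: wrap_ext => b Hb /=; have := Hst b Hb; intuition.
  intuition.
have [HG3|HG3] := classic (sat w a G3).
  have ->: (sat w a (wrap k (FAnd (FAnd O1 (FImp G1 N1)) (FAnd (FAnd O2 (FImp G2 N2)) (FAnd O3 (FImp G3 N3))))) <-> sat w a (wrap k N3)).
    by apply: wrap_ext => b Hb /=; have := Hst b Hb; intuition.
  intuition.
split; first by intuition.
move=> _; apply: wrap_true => // b Hb /=; have := Hst b Hb; intuition.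
Qed.

Lemma wrap_and w k a L N : 0 < size w ->
  (forall b, agree k a b -> (sat w b L <-> sat w a L)) ->
  (sat w a (wrap k (FAnd L N)) <-> sat w a L /\ sat w a (wrap k N)).
Proof.
move=> Hw Hst.
have [HL|HL] := classic (sat w a L).
  have ->: (sat w a (wrap k (FAnd L N)) <-> sat w a (wrap k N)).
    by apply: wrap_ext => b Hb /=; have := Hst b Hb; intuition.
  intuition.
split; last by case.
move=> Hs; exfalso; move: Hs; apply: wrap_false => // b Hb /=.
have := Hst b Hb; intuition.
Qed.

Definition Psem (w : seq bool) (x y : nat) (tp : seq bool) :=
  x + size tp = y /\ forall i, i < size tp -> nth false w (x + i) = nth false tp i.

Lemma Psem_nil w x y : Psem w x y [::] <-> x = y.
Proof. rewrite /Psem /= addn0; split; [by case | by move=> ->]. Qed.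

Lemma Psem_cat w x y z t1 t2 :
  Psem w x y t1 -> Psem w y z t2 -> Psem w x z (t1 ++ t2).
Proof.
move=> [E1 H1] [E2 H2]; split; first by rewrite size_cat; lia.
move=> i; rewrite size_cat nth_cat => Hi.
case: ltnP => Hi1; first exact: H1.
rewrite -H2; last lia.
congr nth; lia.
Qed.

Lemma Psem_split w x z t1 t2 :
  Psem w x z (t1 ++ t2) -> Psem w x (x + size t1) t1 /\ Psem w (x + size t1) z t2.
Proof.
move=> [E H]; rewrite size_cat in E; split; split=> //; try lia.
  move=> i Hi; rewrite H ?size_cat ?nth_cat ?Hi //; lia.
move=> i Hi; rewrite -addnA H ?size_cat ?nth_cat; try lia.
by rewrite ltnNge leq_addr /= addKn.
Qed.

Arguments Psem_cat {w x y z t1 t2}.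
Arguments Psem_split {w x z t1 t2}.

Lemma Psem_lt w x y tp : Psem w x y tp -> 0 < size tp -> x < y.
Proof. by move=> [E _]; lia. Qed.

Definition tokz (j : nat) (t : term) :=
  if t is TVar x then (3 * j + 3 <= x) && (x != (3 * j.+1).+2) else true.

Lemma teval_updZ w j b z t : tokz j t ->
  teval w (upd b (3 * j.+1).+2 z) t = teval w b t.
Proof. case: t => //= x /andP [_ /negPf H]; by rewrite /upd H. Qed.

Lemma sat_lit w b h t : 1 <= teval w b t <= size w ->
  (sat w b (lit h t) <-> nth false w (teval w b t).-1 = h).
Proof.
move=> Ht; case: h => /=; first by intuition.
split; first by move=> H; apply/negbTE/negP => H'; apply: H.
by move=> H [_ H']; rewrite H in H'.
Qed.

Definition Hinner (w : seq bool) (j : nat) := forall tp p q b,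
  tokz j p -> tokz j q -> 1 <= teval w b p -> teval w b p < teval w b q ->
  teval w b q <= size w -> 0 < size tp <= 3 ^ j ->
  ((forall z, teval w b p < z <= teval w b q ->
      sat w (upd b (3 * j.+1).+2 z) (wrap j (M j tp p q))) <->
   Psem w (teval w b p) (teval w b q) tp).

Lemma Hinner0 w : Hinner w 0.
Proof.
move=> tp p q b Hp Hq H1 H2 H3 Hs.
case: tp Hs => [|h [|]] // _.
set x := teval w b p; set y := teval w b q.
have Hy : 1 <= y <= size w by lia.
have Ev : forall z, teval w (upd b 5 z) q = y by move=> z; apply: (@teval_updZ w 0).
split.
- move=> H; have := H x.+1 (ltac:(lia)).
  rewrite /= Ev /upd eqxx => -[E L].
  move: L; rewrite -/(upd b 5 x.+1) (sat_lit w _ h q) Ev // => L.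
  split=> //=; first by rewrite addn1.
  case=> //= _; by rewrite addn0 -L -E.
- move=> [E L] z Hz; rewrite /= Ev /upd eqxx; split; first by rewrite /= in E; lia.
  rewrite -/(upd b 5 z) (sat_lit w _ h q) Ev //.
  have := L 0 isT; rewrite addn0 /= => <-; congr nth; rewrite /= in E; lia.
Qed.

Lemma sat_OrdF w b tp p q : sat w b (OrdF tp p q) <->
  (if tp is [::] then teval w b p = teval w b q else teval w b p < teval w b q).
Proof. by case: tp. Qed.

Lemma sat_Guard w b z p q : sat w b (Guard z p q) <->
  (teval w b p < b z <= teval w b q).
Proof. rewrite /=; split; [case=> H1 H2; apply/andP; split=> //; lia | move/andP=> [H1 H2]; split=> //; lia]. Qed.

Lemma teval_upd_tok w k b y i t : tok k t -> y < 3 * k + 3 -> teval w (upd b y i) t = teval w b t.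
Proof.
case: t => //= x Hx Hy; rewrite /upd; have -> : (x == y) = false by apply/eqP; lia.
by [].
Qed.

Lemma tok_weak k t : tok k.+1 t -> tok k t.
Proof. case: t => //= x; lia. Qed.

Lemma tokz_of_tok j t : tok j.+1 t -> tokz j t.
Proof. case: t => //= x H; apply/andP; split; [lia | apply/eqP; lia]. Qed.

Lemma OrdF_stable w k a b tp p q : tok k p -> tok k q -> agree k a b ->
  (sat w b (OrdF tp p q) <-> sat w a (OrdF tp p q)).
Proof. by move=> Hp Hq Hab; rewrite !sat_OrdF !(teval_agree _ _ _ _ _ Hp Hab) !(teval_agree _ _ _ _ _ Hq Hab). Qed.

Lemma Guard_stable w k a b z p q : tok k p -> tok k q -> 3 * k + 3 <= z -> agree k a b ->
  (sat w b (Guard z p q) <-> sat w a (Guard z p q)).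
Proof.
move=> Hp Hq Hz Hab; rewrite !sat_Guard !(teval_agree _ _ _ _ _ Hp Hab) !(teval_agree _ _ _ _ _ Hq Hab) Hab //.
Qed.

Lemma part_sem w j (HI : Hinner w j) b tp p q : tokz j p -> tokz j q ->
  1 <= teval w b p -> teval w b q <= size w -> size tp <= 3 ^ j ->
  (((if tp is [::] then teval w b p = teval w b q else teval w b p < teval w b q) /\
    (forall z, 1 <= z <= size w -> teval w b p < z <= teval w b q ->
        sat w (upd b (3 * j.+1).+2 z) (wrap j (M j tp p q))))
   <-> Psem w (teval w b p) (teval w b q) tp).
Proof.
move=> Hp Hq H1 H2 Hs; case: tp Hs => [|h t] Hs.
  rewrite Psem_nil; split; first by case.
  by move=> E; split=> // z _; rewrite E; lia.
split.
  move=> [Hl H]; apply (HI (h :: t) p q b Hp Hq H1 Hl H2 (ltac:(simpl in *; lia))).1.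
  by move=> z Hz; apply: H => //; lia.
move=> HP; have Hl := Psem_lt _ _ _ _ HP isT; split=> //.
move=> z _; move: z; apply (HI (h :: t) p q b Hp Hq H1 Hl H2 (ltac:(simpl in *; lia))).2.
exact: HP.
Qed.

Lemma upd_eq (b : nat -> nat) x i : upd b x i x = i.
Proof. by rewrite /upd eqxx. Qed.

Lemma ordle (t : seq bool) (a b : nat) : (if t is [::] then a = b else a < b) -> a <= b.
Proof. case: t => [->|??]; lia. Qed.

Lemma uv_sem w j (HI : Hinner w j) a tp p q u v : 0 < size w -> tok j.+1 p -> tok j.+1 q ->
  1 <= teval w a p -> teval w a q <= size w -> 1 <= u <= size w -> 1 <= v <= size w ->
  size tp <= 3 ^ j.+1 ->
  let a2 := upd (upd a (3 * j.+1) u) (3 * j.+1).+1 v in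
  (forall z, 1 <= z <= size w -> sat w (upd a2 (3 * j.+1).+2 z) (wrap j (M j.+1 tp p q))) <->
  Psem w (teval w a p) u (take (3^j) tp) /\ Psem w u v (take (3^j) (drop (3^j) tp)) /\
  Psem w v (teval w a q) (drop (3^j + 3^j) tp).
Proof.
move=> Hw Hp Hq H1 H2 Hu Hv Hs a2.
have Hp' := tokz_of_tok _ _ Hp; have Hq' := tokz_of_tok _ _ Hq.
have HU : tokz j (TVar (3 * j.+1)) by rewrite /=; apply/andP; split; [lia|apply/eqP; lia].
have HV : tokz j (TVar (3 * j.+1).+1) by rewrite /=; apply/andP; split; [lia|apply/eqP; lia].
have Ep : teval w a2 p = teval w a p.
  by rewrite /a2 !(teval_upd_tok _ _ _ _ _ _ Hp) //; lia.
have Eq : teval w a2 q = teval w a q.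
  by rewrite /a2 !(teval_upd_tok _ _ _ _ _ _ Hq) //; lia.
have EU : teval w a2 (TVar (3 * j.+1)) = u.
  by rewrite /= /a2 /upd eqxx; have -> : (3 * j.+1 == (3 * j.+1).+1) = false by apply/eqP; lia.
have EV : teval w a2 (TVar (3 * j.+1).+1) = v by rewrite /= /a2 /upd eqxx.
set x := teval w a p; set y := teval w a q.
set t1 := take (3^j) tp; set t2 := take (3^j) (drop (3^j) tp); set t3 := drop (3^j + 3^j) tp.
have Hz : forall z, 1 <= z <= size w ->
  (sat w (upd a2 (3 * j.+1).+2 z) (wrap j (M j.+1 tp p q)) <->
   ((if t1 is [::] then x = u else x < u) /\ (if t2 is [::] then u = v else u < v) /\
    (if t3 is [::] then v = y else v < y)) /\
   (x < z <= u -> sat w (upd a2 (3 * j.+1).+2 z) (wrap j (M j t1 p (TVar (3 * j.+1))))) /\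
   (u < z <= v -> sat w (upd a2 (3 * j.+1).+2 z) (wrap j (M j t2 (TVar (3 * j.+1)) (TVar (3 * j.+1).+1)))) /\
   (v < z <= y -> sat w (upd a2 (3 * j.+1).+2 z) (wrap j (M j t3 (TVar (3 * j.+1).+1) q)))).
  move=> z Hz.
  have T1 : tok j p := tok_weak _ _ Hp.
  have T2 : tok j q := tok_weak _ _ Hq.
  have T3 : tok j (TVar (3 * j.+1)) by rewrite /=; lia.
  have T4 : tok j (TVar (3 * j.+1).+1) by rewrite /=; lia.
  rewrite [M j.+1 _ _ _]/= wrap3 //.
  - rewrite !sat_OrdF !sat_Guard !(teval_updZ _ j) // Ep Eq EU EV !upd_eq -/t1 -/t2 -/t3.
    by [].
  - move=> b Hb.
    have HZ : 3 * j + 3 <= (3 * j.+1).+2 by lia.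
    have O := fun tp' p' q' (H1 : tok j p') (H2 : tok j q') => OrdF_stable w j _ b tp' p' q' H1 H2 Hb.
    have G := fun p' q' (H1 : tok j p') (H2 : tok j q') => Guard_stable w j _ b _ p' q' H1 H2 HZ Hb.
    split; first exact: O. split; first exact: G.
    split; first exact: O. split; first exact: G.
    split; first exact: O. exact: G.
  - rewrite !sat_OrdF !sat_Guard !(teval_updZ _ j) // Ep Eq EU EV !upd_eq -/t1 -/t2 -/t3.
    move=> /ordle O1 /ordle O2 /ordle O3; repeat split; move=> [/andP [? ?] /andP [? ?]]; lia.
have Hc : size tp <= 3 * 3 ^ j by rewrite -expnS.
have S1 : size t1 <= 3 ^ j by rewrite size_take; case: ifP; lia.
have S2 : size t2 <= 3 ^ j by rewrite size_take; case: ifP; lia.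
have S3 : size t3 <= 3 ^ j by rewrite size_drop; lia.
have P1 := part_sem w j HI a2 t1 p (TVar (3 * j.+1)) Hp' HU (ltac:(rewrite Ep; lia)) (ltac:(rewrite EU; lia)) S1.
have P2 := part_sem w j HI a2 t2 (TVar (3 * j.+1)) (TVar (3 * j.+1).+1) HU HV (ltac:(rewrite EU; lia)) (ltac:(rewrite EV; lia)) S2.
have P3 := part_sem w j HI a2 t3 (TVar (3 * j.+1).+1) q HV Hq' (ltac:(rewrite EV; lia)) (ltac:(rewrite Eq; lia)) S3.
rewrite Ep EU in P1; rewrite EU EV in P2; rewrite EV Eq in P3.
have H11 : 1 <= 1 <= size w by rewrite leqnn.
split.
- move=> H.
  have [[O1 [O2 O3]] _] := (Hz 1 H11).1 (H 1 H11).
  rewrite -P1 -P2 -P3.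
  split; [split=> // z Hz' Hg; exact: ((Hz z Hz').1 (H z Hz')).2.1 Hg|].
  split; [split=> // z Hz' Hg; exact: ((Hz z Hz').1 (H z Hz')).2.2.1 Hg|].
  split=> // z Hz' Hg; exact: ((Hz z Hz').1 (H z Hz')).2.2.2 Hg.
- move=> [/P1 [O1 F1] [/P2 [O2 F2] /P3 [O3 F3]]] z Hz'; apply/(Hz z Hz').
  split; first by [].
  split; first by apply: F1.
  split; first by apply: F2.
  by apply: F3.
Qed.

Lemma split3 (tp : seq bool) c : tp = take c tp ++ take c (drop c tp) ++ drop (c + c) tp.
Proof. by rewrite -drop_drop !cat_take_drop. Qed.

Lemma core w j (HI : Hinner w j) tp p q a : 0 < size w -> tok j.+1 p -> tok j.+1 q ->
  1 <= teval w a p -> teval w a q <= size w -> size tp <= 3 ^ j.+1 ->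
  (sat w a (wrap j.+1 (M j.+1 tp p q)) <-> Psem w (teval w a p) (teval w a q) tp).
Proof.
move=> Hw Hp Hq H1 H2 Hs.
transitivity (exists u, 1 <= u <= size w /\ exists v, 1 <= v <= size w /\
  forall z, 1 <= z <= size w ->
  sat w (upd (upd (upd a (3 * j.+1) u) (3 * j.+1).+1 v) (3 * j.+1).+2 z) (wrap j (M j.+1 tp p q))).
  by [].
split.
- move=> [u [Hu [v [Hv H]]]].
  have [P1 [P2 P3]] := (uv_sem w j HI a tp p q u v Hw Hp Hq H1 H2 Hu Hv Hs).1 H.
  rewrite (split3 tp (3 ^ j)).
  exact: Psem_cat P1 (Psem_cat P2 P3).
- rewrite {1}(split3 tp (3 ^ j)) => /Psem_split [P1 /Psem_split [P2 P3]].
  have [E1 _] := P1; have [E2 _] := P2; have [E3 _] := P3.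
  exists (teval w a p + size (take (3 ^ j) tp)); split; first lia.
  exists (teval w a p + size (take (3 ^ j) tp) + size (take (3 ^ j) (drop (3 ^ j) tp))); split; first lia.
  apply/(uv_sem w j HI a tp p q _ _ Hw Hp Hq H1 H2 _ _ Hs); try lia.
  by split.
Qed.

Lemma tok_of_tokz k t : tokz k t -> tok k t.
Proof. by case: t => //= x /andP []. Qed.

Lemma hinner_all w : 0 < size w -> forall j, Hinner w j.
Proof.
move=> Hw; elim=> [|j IH]; first exact: Hinner0.
move=> tp p q b Hp Hq H1 Hlt H2 Hs.
have Tp : tok j.+1 p := tok_of_tokz _ _ Hp.
have Tq : tok j.+1 q := tok_of_tokz _ _ Hq.
split.
- move=> H; have := H _ (ltac:(lia) : teval w b p < teval w b q <= teval w b q).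
  rewrite (core w j IH _ _ _ _ Hw Tp Tq) ?teval_updZ //; by case/andP: Hs.
- move=> HP z Hz.
  rewrite (core w j IH _ _ _ _ Hw Tp Tq) ?teval_updZ //; by case/andP: Hs.
Qed.

Lemma lit_stable w h b b' : sat w b (lit h TMin) <-> sat w b' (lit h TMin).
Proof. by case: h. Qed.

Lemma top_sem w' w j : 0 < size w' -> size (behead w) <= 3 ^ j.+1 ->
  (holds w' (wrap j.+1 (FAnd (lit (head false w) TMin) (M j.+1 (behead w) TMin TMax))) <->
   nth false w' 0 = head false w /\ Psem w' 1 (size w') (behead w)).
Proof.
move=> Hw Hs; rewrite /holds wrap_and //; last by move=> b _; apply: lit_stable.
rewrite (core w' j (hinner_all w' Hw j)) //= sat_lit //=; by rewrite leqnn.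
Qed.

Lemma fv_phi w j : fv (wrap j.+1 (FAnd (lit (head false w) TMin) (M j.+1 (behead w) TMin TMax))) = [::].
Proof.
case E: (fv _) => [|y s] //.
have : y \in fv (wrap j.+1 (FAnd (lit (head false w) TMin) (M j.+1 (behead w) TMin TMax))).
  by rewrite E inE eqxx.
case/fv_wrap => Hin H2.
change (is_true (y \in fv (lit (head false w) TMin) ++ fv (M j.+1 (behead w) TMin TMax))) in Hin.
rewrite mem_cat fv_lit in Hin.
case/orP: Hin => // Hin.
case: (fv_M _ _ _ _ _ Hin) => [|[|]] // H1.
have : maxn j.+1 1 = j.+1 by lia.
lia.
Qed.

Theorem mainTheorem9 :
  forall (n : nat) (w : seq bool), 1 <= n -> size w = n ->
  exists phi : formula,
    sentence phi /\ prenex phi /\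
    qcount phi = 3 * ceil_log3 n /\
    qprefix phi = flatten (nseq (ceil_log3 n) [:: QEx; QEx; QAll]) /\
    holds w phi /\
    (forall w' : seq bool, size w' = n -> w' <> w -> ~ holds w' phi).
Proof.
move=> n w Hn Hw.
have [En1|Hn2] := eqVneq n 1.
  rewrite En1 in Hw *; rewrite /ceil_log3 up_log1.
  exists (lit (head false w) TMin).
  have Hsat : forall w', size w' = 1 -> (holds w' (lit (head false w) TMin) <-> nth false w' 0 = head false w).
    by move=> w' Hw'; rewrite /holds sat_lit //= Hw'.
  split; first by case: (head false w).
  split; first by case: (head false w).
  split; first by case: (head false w).
  split; first by case: (head false w).
  split; first by apply/Hsat.
  move=> w' Hw' Hne /Hsat; rewrite Hw' => /(_ erefl) H; apply: Hne.
  apply: (eq_from_nth (x0 := false)); first by rewrite Hw Hw'.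
  by rewrite Hw' => i; case: i.
have Hk : 0 < ceil_log3 n by rewrite /ceil_log3 up_log_gt0; lia.
have Hb : n <= 3 ^ ceil_log3 n by apply: up_logP.
move: Hb; case E: (ceil_log3 n) Hk => [|j] // _ Hb.
set phi := wrap j.+1 (FAnd (lit (head false w) TMin) (M j.+1 (behead w) TMin TMax)).
have Hsb : size (behead w) <= 3 ^ j.+1 by rewrite size_behead Hw; lia.
exists phi.
split; first exact: fv_phi.
have Q0 : qcount (FAnd (lit (head false w) TMin) (M j.+1 (behead w) TMin TMax)) = 0.
  change (qcount (lit (head false w) TMin) + qcount (M j.+1 (behead w) TMin TMax) = 0).
  by rewrite qcount_M; case: (head false w).
split; first by rewrite /prenex /phi matrix_wrap /qfree Q0.
split; first by rewrite /phi qcount_wrap Q0 addn0.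
split; first by rewrite /phi qprefix_wrap cats0.
split.
  apply/(top_sem w w j); [lia | exact: Hsb |].
  split; first by [].
  split; first by rewrite size_behead Hw; lia.
  by move=> i _; rewrite nth_behead.
move=> w' Hw' Hne /(top_sem w' w j (ltac:(lia)) Hsb) [H0 [_ HP]].
apply: Hne; apply: (eq_from_nth (x0 := false)); first by rewrite Hw Hw'.
rewrite Hw' => -[|i] Hi //.
have := HP i (ltac:(rewrite size_behead Hw; lia)).
by rewrite nth_behead add1n.
Qed.
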